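(* Let $A$ and $B$ be disjoint cubic graphs with $v(A)\equiv 0\pmod 6$ and $v(B)\equiv 0\pmod 6$, let $a\in V(A)$ with $N(a,A)=\{a_1,a_2,a_3\}$ and $b\in V(B)$ with $N(b,B)=\{b_1,b_2,b_3\}$, and let $H=Aa\sigma bB$ where $\sigma(a_i)=b_i$ for $i\in\{1,2,3\}$. Suppose $A$ has no $\Lambda$-factor containing the edge $aa_1$. Then $v(H)\equiv 4\pmod 6$ and $H-b_2$ has no $\Lambda$-factor avoiding the edge $h=a_3b_3$ (i.e. every $\Lambda$-factor of $H-b_2$ contains $h$).
   Context: Graphs are finite, undirected, without loops or multiple edges; $v(G)=|V(G)|$; $N(x,G)$ is the set of neighbours of $x$. For disjoint graphs $A,B$, vertices $a,b$ and a bijection $\sigma:N(a,A)\to N(b,B)$, $Aa\sigma bB$ is $(A-a)\cup(B-b)$ together with the new edges $\{x\sigma(x): x\in N(a,A)\}$. $H-b_2$ denotes deletion of the vertex $b_2$. A $\Lambda$-factor of a graph is a spanning subgraph each of whose components is a path on 3 vertices. *)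

(* Defs.v *)
From mathcomp Require Import all_boot.
Set Implicit Arguments. Unset Strict Implicit. Unset Printing Implicit Defensive.

Definition simple_graph (T : finType) (e : rel T) : Prop :=
  symmetric e /\ irreflexive e.

Definition nbhd (T : finType) (e : rel T) (x : T) : {set T} := [set y | e x y].

Definition cubic (T : finType) (e : rel T) : Prop :=
  forall x : T, #|nbhd e x| = 3.

(* A Lambda-factor of (T,e): a spanning subgraph with edge relation f
   (f symmetric, f contained in e) each of whose connected components is a
   path on 3 vertices x - y - z. *)
Definition Lambda_factor (T : finType) (e f : rel T) : Prop :=
  [/\ forall x y, f x y -> e x y,
      symmetric f &
      forall v : T, exists x y z : T,
        [/\ [&& x != y, y != z & x != z],
            [set w | connect f v w] = [set x; y; z] &
            [&& f x y, f y z & ~~ f x z]]].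

(* Vertex set of A a sigma b B : (V(A) - a) disjoint-union (V(B) - b). *)
Definition VH (TA TB : finType) (a : TA) (b : TB) : finType :=
  ({x : TA | x != a} + {y : TB | y != b})%type.

(* Edges of A a sigma b B, where sigma : N(a,A) -> N(b,B) is given as a
   function TA -> TB (only its values on N(a,A) matter). *)
Definition join_edge (TA TB : finType) (eA : rel TA) (a : TA)
    (eB : rel TB) (b : TB) (sigma : TA -> TB) : rel (VH a b) :=
  fun u v =>
    match u, v with
    | inl x, inl x' => eA (val x) (val x')
    | inr y, inr y' => eB (val y) (val y')
    | inl x, inr y => eA a (val x) && (sigma (val x) == val y)
    | inr y, inl x => eA a (val x) && (sigma (val x) == val y)
    end.

Definition orig (TA TB : finType) (a : TA) (b : TB) (u : VH a b) : TA + TB :=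
  match u with inl x => inl (val x) | inr y => inr (val y) end.

Definition del_vertex (T : finType) (w : T) : finType := {x : T | x != w}.
Definition del_edge (T : finType) (e : rel T) (w : T) : rel (del_vertex w) :=
  fun u v => e (val u) (val v).
Arguments join_edge {TA TB} eA a eB b sigma.
Arguments del_edge {T} e w.

(* Main.v *)
Require Import Defs.
From mathcomp Require Import all_boot zify.
From Stdlib Require Classical_Prop.
Set Implicit Arguments. Unset Strict Implicit. Unset Printing Implicit Defensive.

Lemma closed_conn (T : finType) (f : rel T) (S : {set T}) :
  (forall p q, p \in S -> f p q -> q \in S) ->
  forall p q, connect f p q -> p \in S -> q \in S.
Proof.
move=> cl p q /connectP [s]; elim: s p => [|x s IH] p /=; first by move=> _ ->.
case/andP=> fpx ps qe pS; apply: (IH x ps qe); exact: cl pS fpx.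
Qed.

Lemma card3 (T : finType) (x y z : T) :
  [&& x != y, y != z & x != z] -> #|[set x; y; z]| = 3.
Proof.
case/and3P=> xy yz xz.
rewrite [_ :|: _]setUC cardsU1 cards2 xy !inE negb_or eq_sym xz eq_sym yz.
by [].
Qed.

Lemma comp_path (T : finType) (f : rel T) (x y z v : T) :
  symmetric f -> f x y -> f y z ->
  (forall p q, p \in [set x; y; z] -> f p q -> q \in [set x; y; z]) ->
  v \in [set x; y; z] -> [set w | connect f v w] = [set x; y; z].
Proof.
move=> sf fxy fyz cl vS; apply/setP=> w; rewrite inE; apply/idP/idP.
  by move=> cvw; exact: closed_conn cl _ _ cvw vS.
have cx : forall t, t \in [set x; y; z] -> connect f x t.
  move=> t; rewrite !inE => /orP [/orP [] |] /eqP ->.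
  - exact: connect0.
  - exact: connect1.
  - exact: connect_trans (connect1 fxy) (connect1 fyz).
move=> wS; apply: connect_trans (cx _ wS).
by rewrite (sym_connect_sym sf); apply: cx.
Qed.

Lemma count3 (T : finType) (f : rel T) : symmetric f ->
  (forall v, #|[set w | connect f v w]| = 3) ->
  forall S : {set T}, (forall p q, p \in S -> f p q -> q \in S) -> #|S| %% 3 = 0.
Proof.
move=> sf c3 S; move: {2}#|S| (leqnn #|S|) => n.
elim: n S => [|n IH] S hS cl.
  by move: hS; rewrite leqn0 => /eqP ->.
case: (set_0Vmem S) => [-> | [v vS]]; first by rewrite cards0.
set C := [set w | connect f v w].
have CS : C \subset S.
  by apply/subsetP=> w; rewrite inE => cvw; exact: closed_conn cl _ _ cvw vS.
have eq := cardsID C S; rewrite (setIidPr CS) c3 in eq.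
have cl' : forall p q, p \in S :\: C -> f p q -> q \in S :\: C.
  move=> p q; rewrite !inE => /andP [pC pS] fpq; rewrite (cl _ _ pS fpq) andbT.
  apply: contra pC => cvq; apply: connect_trans cvq _.
  by rewrite (sym_connect_sym sf); apply: connect1.
have := IH (S :\: C) ltac:(lia) cl'; lia.
Qed.
Set Implicit Arguments. Unset Strict Implicit. Unset Printing Implicit Defensive.

Theorem mainTheorem10
  (TA TB : finType) (eA : rel TA) (eB : rel TB)
  (a a1 a2 a3 : TA) (b b1 b2 b3 : TB) (sigma : TA -> TB)
  (b2H : VH a b) :
  simple_graph eA -> simple_graph eB -> cubic eA -> cubic eB ->
  #|TA| %% 6 = 0 -> #|TB| %% 6 = 0 ->
  nbhd eA a = [set a1; a2; a3] -> nbhd eB b = [set b1; b2; b3] ->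
  sigma a1 = b1 -> sigma a2 = b2 -> sigma a3 = b3 ->
  orig b2H = inr b2 ->
  ~ (exists f : rel TA, Lambda_factor eA f /\ f a a1) ->
  #|VH a b| %% 6 = 4 /\
  (forall f : rel (del_vertex b2H),
     Lambda_factor (del_edge (join_edge eA a eB b sigma) b2H) f ->
     exists u v : del_vertex b2H,
       [/\ f u v, orig (val u) = inl a3 & orig (val v) = inr b3]).
Proof.
move=> [symA irrA] [symB irrB] cubA cubB hA hB nA nB s1 s2 s3.
case: b2H => [x|y0] /=; first by [].
case=> e2; rewrite -e2 in nB s2 => Hnoa.
have TA0 : 0 < #|TA| by apply/card_gt0P; exists a.
have TB0 : 0 < #|TB| by apply/card_gt0P; exists b.
have cA : #|{: {x : TA | x != a}}| = #|TA|.-1.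
  by rewrite card_sig -(cardC1 a); apply: eq_card.
have cB : #|{: {x : TB | x != b}}| = #|TB|.-1.
  by rewrite card_sig -(cardC1 b); apply: eq_card.
split.
  rewrite /VH card_sum cA cB; lia.
move=> f [fE symf compf].
apply: Classical_Prop.NNPP => Hno.
pose D := del_vertex (inr y0 : VH a b).
pose E := del_edge (join_edge eA a eB b sigma) (inr y0 : VH a b).
have Eirr : forall u : D, ~~ E u u.
  by move=> [[x|y] hu]; rewrite /E /del_edge /= ?irrA ?irrB.
have firr : forall u : D, ~~ f u u.
  by move=> u; apply/negP=> /fE h; move: (Eirr u); rewrite /E h.
have eaa1 : eA a a1.
  by have : a1 \in nbhd eA a; [rewrite nA !inE eqxx | rewrite inE].
have a1a : a1 != a by apply: contraTneq eaa1 => ->; rewrite irrA.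
pose SA := [set u : D | if val u is inl _ then true else false].
have orig_inj : forall u v : D, orig (val u) = orig (val v) -> u = v.
  move=> [[x|y] hu] [[x'|y'] hv] //= e; apply: val_inj => /=; case: e => // e.
    by congr inl; apply: val_inj.
  by congr inr; apply: val_inj.
have Cr : forall u v : D, f u v -> u \in SA -> v \notin SA ->
    orig (val u) = inl a1 /\ orig (val v) = inr b1.
  move=> [[x|y] hu] [[x'|y'] hv] //= fuv; rewrite !inE //= => _ _.
  have := fE _ _ fuv; rewrite /del_edge /= => /andP [ax /eqP sx].
  have : val x \in nbhd eA a by rewrite inE.
  rewrite nA !inE => /orP [/orP [] |] /eqP ex.
  - by rewrite -sx ex s1.
  - exfalso; rewrite ex s2 in sx; have ey : y' = y0 by apply: val_inj.
    by have := hv; rewrite ey eqxx.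
  - exfalso; apply: Hno; exists (exist _ (inl x) hu), (exist _ (inr y') hv).
    by split => //=; rewrite ?ex // -sx ex s3.
pose gA := fun p : {x : TA | x != a} =>
  (@exist _ (fun u : VH a b => u != inr y0) (inl p) isT : D).
have gAinj : injective gA.
  by move=> p q e; have := congr1 val e => /= [[]].
have SAeq : SA = gA @: setT.
  apply/setP => [[[p|y] hu]]; rewrite !inE /=.
    by apply/esym/imsetP; exists p => //; apply: val_inj.
  apply/esym/negbTE/imsetP => [[p _ e]].
  by have := congr1 val e.
have cardSA : #|SA| = #|TA|.-1 by rewrite SAeq card_imset // cardsT cA.
have c3 : forall v : D, #|[set w | connect f v w]| = 3.
  by move=> v; have [x [y [z [dist -> _]]]] := compf v; rewrite card3.
case: (boolP [exists u, exists v, [&& f u v, u \in SA & v \notin SA]]);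
  last first.
  move=> nocross.
  have cl : forall p q, p \in SA -> f p q -> q \in SA.
    move=> p q pA fpq; apply: contraNT nocross => qA.
    by apply/existsP; exists p; apply/existsP; exists q; rewrite fpq pA qA.
  have := count3 symf c3 cl; rewrite cardSA; lia.
move=> /existsP [u1 /existsP [v1 /and3P [fu1v1 u1A v1A]]].
have [ou1 ov1] := Cr _ _ fu1v1 u1A v1A.
pose C := [set w | connect f u1 w].
have u1C : u1 \in C by rewrite inE connect0.
have v1C : v1 \in C by rewrite inE connect1.
have Ccl : forall p q, p \in C -> f p q -> q \in C.
  by move=> p q; rewrite !inE => cp fpq; apply: connect_trans cp (connect1 fpq).
have Scl : forall p q, p \in SA :|: C -> f p q -> q \in SA :|: C.
  move=> p q; rewrite inE => /orP [pA | pC] fpq; last by rewrite inE (Ccl _ _ pC fpq) orbT.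
  case qA: (q \in SA); first by rewrite inE qA.
  have [op oq] := Cr _ _ fpq pA (negbT qA).
  have -> : q = v1 by apply: orig_inj; rewrite oq ov1.
  by rewrite inE v1C orbT.
have k2 : #|SA :&: C| <= 2.
  have : #|C| = 3 := c3 u1.
  rewrite (cardsD1 v1 C) v1C => e3.
  have -> : 2 = #|C :\ v1| by lia.
  apply: subset_leq_card; apply/subsetP => t; rewrite !inE => /andP [tA tC].
  rewrite tC andbT; apply: contraTneq tA => ->; by rewrite inE in v1A.
have kk : #|SA :&: C| = 2.
  have := count3 symf c3 Scl; have := cardsUI SA C; rewrite cardSA c3.
  move: k2; set k := #|SA :&: C|; set U := #|SA :|: C|; lia.
have [w] : exists w, w \in (SA :&: C) :\ u1.
  apply/card_gt0P; move: kk; rewrite (cardsD1 u1) in_setI u1A u1C.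
  by set k := #|_ :\ u1|; lia.
rewrite in_setD1 in_setI => /and3P [wu1 wA wC].
have AC2 : forall q, q \in SA -> q \in C -> q = u1 \/ q = w.
  have : [set u1; w] == SA :&: C.
    rewrite eqEcard kk cards2 eq_sym wu1 andbT.
    by apply/subsetP => t; rewrite in_set2 => /orP [] /eqP ->; rewrite in_setI ?u1A ?u1C ?wA ?wC.
  move=> /eqP eS q qA qC; have : q \in SA :&: C by rewrite in_setI qA qC.
  by rewrite -eS in_set2 => /orP [] /eqP ->; [left | right].
have fu1w : f u1 w.
  have [x [y [z [_ eC /and3P [fxy fyz _]]]]] := compf u1.
  have [n fwn nC] : exists2 n, f w n & n \in C.
    move: wC; rewrite /C eC !inE => /orP [/orP [] |] /eqP ->.
    - by exists y; rewrite // !inE eqxx orbT.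
    - by exists z; rewrite // !inE eqxx orbT.
    - by exists y; rewrite 1?symf // !inE eqxx orbT.
  case nSA : (n \in SA); last first.
    have [ow _] := Cr _ _ fwn wA (negbT nSA).
    by move: wu1; rewrite (orig_inj w u1) ?eqxx // ow ou1.
  case: (AC2 n nSA nC) => en; first by rewrite symf -en.
  by move: (firr w); rewrite -{2}en fwn.
pose gT := fun p : TA => if insub p is Some p' then gA p' else u1.
have gT_val : forall p (hp : p != a), gT p = gA (Sub p hp).
  by move=> p hp; rewrite /gT insubT.
pose toA := fun u : D => if val u is inl p then val p else a.
have toA_gT : forall p, p != a -> toA (gT p) = p.
  by move=> p hp; rewrite (gT_val p hp).
have gT_SA : forall p, p != a -> gT p \in SA.
  by move=> p hp; rewrite (gT_val p hp) inE.
have gT_toA : forall u, u \in SA -> gT (toA u) = u.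
  move=> [[p|y] hu]; rewrite inE //= => _.
  rewrite (gT_val _ (valP p)); apply: val_inj => /=; congr inl; exact: val_inj.
have toA_na : forall u, u \in SA -> toA u != a.
  by move=> [[p|y] hu]; rewrite inE //= => _; exact: (valP p).
have gTa1 : gT a1 = u1 by apply: orig_inj; rewrite (gT_val _ a1a) ou1.
have toAu1 : toA u1 = a1 by rewrite -gTa1 toA_gT.
have w0a : toA w != a := toA_na _ wA.
have gTw0 : gT (toA w) = w := gT_toA _ wA.
have w0a1 : toA w != a1.
  by apply: contraNneq wu1 => e; apply/eqP; rewrite -gTw0 e gTa1.
pose fA := fun p q : TA => ((p == a) && (q == a1)) || ((q == a) && (p == a1)) ||
   [&& p != a, q != a & f (gT p) (gT q)].
have fA_eq : forall p q, p != a -> q != a -> fA p q = f (gT p) (gT q).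
  by move=> p q hp hq; rewrite /fA (negbTE hp) (negbTE hq).
have fAa : forall q, fA a q -> q = a1.
  move=> q; rewrite /fA eqxx /= [a == a1]eq_sym (negbTE a1a) andbF !orbF.
  by move/eqP.
have fA_a : forall p, fA p a -> p = a1.
  move=> p; rewrite /fA eqxx /= [a == a1]eq_sym (negbTE a1a) !andbF /= !orbF.
  by move/eqP.
have fAsym : symmetric fA.
  move=> p q; rewrite /fA (symf (gT p)); congr (_ || _); first exact: orbC.
  by rewrite andbCA.
apply: Hnoa; exists fA; split; last by rewrite /fA !eqxx.
split => //.
  move=> p q; rewrite /fA => /orP [/orP [] /andP [/eqP -> /eqP ->] | /and3P [pa qa fpq]].
  - exact: eaa1.
  - by rewrite symA.
  by have := fE _ _ fpq; rewrite (gT_val p pa) (gT_val q qa) /del_edge /=.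
move=> v; case: (boolP (v \in [set a; a1; toA w])) => vS.
  exists a, a1, (toA w).
  have f1 : fA a a1 by rewrite /fA !eqxx.
  have f2 : fA a1 (toA w) by rewrite fA_eq // gTa1 gTw0.
  have f3 : ~~ fA a (toA w) by rewrite /fA eqxx (negbTE w0a1) (negbTE w0a).
  split; last by rewrite f1 f2 f3.
    by rewrite [a == a1]eq_sym a1a [a1 == _]eq_sym w0a1 [a == _]eq_sym w0a.
  apply: comp_path => // p q pS fpq.
  case: (eqVneq q a) => [->|qa]; first by rewrite !inE eqxx.
  case: (eqVneq p a) => [ep|pa].
    by rewrite ep in fpq; rewrite (fAa _ fpq) !inE eqxx orbT.
  rewrite fA_eq // in fpq.
  have gpC : gT p \in C.
    have : p = a1 \/ p = toA w.
      by move: pS; rewrite !inE (negbTE pa) /= => /orP [] /eqP ->; [left | right].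
    by case=> ->; rewrite ?gTa1 ?gTw0.
  case: (AC2 _ (gT_SA q qa) (Ccl _ _ gpC fpq)) => e.
    by rewrite -(toA_gT q qa) e toAu1 !inE eqxx orbT.
  by rewrite -(toA_gT q qa) e !inE eqxx !orbT.
move: vS; rewrite !inE => /norP [/norP [va va1] vw].
have VA := gT_SA v va.
have VC : gT v \notin C.
  apply/negP => VC; case: (AC2 _ VA VC) => e.
    by move: va1; rewrite -(toA_gT v va) e toAu1 eqxx.
  by move: vw; rewrite -(toA_gT v va) e eqxx.
pose S2 := SA :\: C.
have S2cl : forall p q, p \in S2 -> f p q -> q \in S2.
  move=> p q; rewrite !in_setD => /andP [pC pA] fpq.
  apply/andP; split.
    by apply: contra pC => qC; apply: Ccl qC _; rewrite symf.
  case qA: (q \in SA) => //.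
  have [op _] := Cr _ _ fpq pA (negbT qA).
  by move: pC; rewrite (orig_inj p u1) ?u1C // op ou1.
have [x [y [z [dist eV /and3P [fxy fyz nfxz]]]]] := compf (gT v).
have inS2 : forall t, t \in [set x; y; z] -> t \in S2.
  move=> t; rewrite -eV inE => ct; apply: closed_conn S2cl _ _ ct _.
  by rewrite in_setD VC VA.
have tA : forall t, t \in [set x; y; z] -> t \in SA.
  by move=> t /inS2; rewrite in_setD => /andP [].
have tC : forall t, t \in [set x; y; z] -> t \notin C.
  by move=> t /inS2; rewrite in_setD => /andP [].
have gtt : forall t, t \in [set x; y; z] -> gT (toA t) = t.
  by move=> t /tA; exact: gT_toA.
have xS : x \in [set x; y; z] by rewrite !inE eqxx ?orbT.
have yS : y \in [set x; y; z] by rewrite !inE eqxx ?orbT.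
have zS : z \in [set x; y; z] by rewrite !inE eqxx ?orbT.
have toA_inj : forall t1 t2, t1 \in [set x; y; z] -> t2 \in [set x; y; z] ->
    (toA t1 == toA t2) = (t1 == t2).
  move=> t1 t2 h1 h2; apply/eqP/eqP => [e|->//].
  by rewrite -(gtt _ h1) -(gtt _ h2) e.
have fAt : forall t1 t2, t1 \in [set x; y; z] -> t2 \in [set x; y; z] ->
    fA (toA t1) (toA t2) = f t1 t2.
  by move=> t1 t2 h1 h2; rewrite fA_eq ?toA_na ?tA // !gtt.
exists (toA x), (toA y), (toA z).
split; last by rewrite !fAt // fxy fyz nfxz.
  by rewrite !toA_inj.
have key : forall t, t \in [set x; y; z] -> forall q, fA (toA t) q ->
    q \in [set toA x; toA y; toA z].
  move=> t tS q; have ta := toA_na _ (tA _ tS).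
  case: (eqVneq q a) => [->|qa].
    move/fA_a => e; have := tC _ tS.
    by rewrite -(gtt _ tS) e gTa1 u1C.
  rewrite fA_eq // (gtt _ tS) => ftq.
  have : t \in [set w | connect f (gT v) w] by rewrite eV.
  rewrite inE => ct.
  have : gT q \in [set x; y; z].
    by rewrite -eV inE; exact: connect_trans ct (connect1 ftq).
  move=> gq; rewrite -(toA_gT q qa); move: gq.
  by rewrite !inE => /orP [/orP [] |] /eqP ->; rewrite eqxx ?orbT.
apply: comp_path; rewrite ?fAt //.
  move=> p q pS fpq.
  have [t tS ep] : exists2 t, t \in [set x; y; z] & p = toA t.
    by move: pS; rewrite !inE => /orP[/orP[]|] /eqP ->; [exists x | exists y | exists z].
  by rewrite ep in fpq; exact: key tS q fpq.
have : gT v \in [set x; y; z] by rewrite -eV inE connect0.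
move=> gv; rewrite -(toA_gT v va); move: gv.
by rewrite !inE => /orP [/orP [] |] /eqP ->; rewrite eqxx ?orbT.
Qed.
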